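(* (a) The map $\Phi$ is reversible with respect to the involution $\sigma(p,u)=(u,p)$: $\Phi^{-1}(p,u)=\sigma\circ\Phi(u,p)$ (wherever defined). (b) For the trajectory $T_n$ with coordinates $(p_j,u_j)$, $u_j=p_{n-j}$ for $0\le j\le n$; in particular $u_n=p_0$. (c) If $n=2k$ then $p_k=u_k$; if $n=2k-1$ then $p_{k-1}=u_k=1$.
   Context: $\Phi$ is the partial map of $\mathbb{R}^2$ defined for $p\ne0$ by $\Phi(p,u)=\bigl(p^2(u+1)-1,\ 1/p\bigr)$. For $n\ge1$, the trajectory $T_n$ is the (existing and unique) finite sequence $(p_j,u_j)$, $j=0,\dots,n$, with $(p_j,u_j)=\Phi(p_{j-1},u_{j-1})$ for $1\le j\le n$, $u_0=0$, $p_n=0$, and $p_j>0$ for $0\le j\le n-1$. *)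

(* Defs.v *)
From Stdlib Require Import Reals Lra Lia.
Open Scope R_scope.

(* Phi(p,u) = (p^2 (u+1) - 1, 1/p); only meaningful for p <> 0
   (Rinv 0 is an unspecified value; all statements guard p <> 0). *)
Definition Phi (x : R * R) : R * R :=
  let (p, u) := x in (p ^ 2 * (u + 1) - 1, / p).

Definition swap_sigma (x : R * R) : R * R := let (p, u) := x in (u, p).

Definition is_trajectory (n : nat) (p u : nat -> R) : Prop :=
  (1 <= n)%nat /\
  u 0%nat = 0 /\
  (forall j : nat, (1 <= j <= n)%nat ->
     (p j, u j) = Phi (p (j - 1)%nat, u (j - 1)%nat)) /\
  p n = 0 /\
  (forall j : nat, (j < n)%nat -> 0 < p j).

(* Main.v *)
Require Import Defs.
From Stdlib Require Import Reals Lra Lia Psatz.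
Open Scope R_scope.

Lemma traj_step n p u : is_trajectory n p u -> forall m, (m < n)%nat ->
  p (S m) = p m ^ 2 * (u m + 1) - 1 /\ u (S m) = / p m.
Proof.
  intros [_ [_ [H _]]] m Hm.
  specialize (H (S m) ltac:(lia)).
  replace (S m - 1)%nat with m in H by lia.
  unfold Phi in H. injection H; intros; split; assumption.
Qed.

Lemma u_nonneg n p u : is_trajectory n p u -> forall m, (m <= n)%nat -> 0 <= u m.
Proof.
  intros Ht m Hm. destruct m as [|m].
  - destruct Ht as [_ [H _]]. lra.
  - destruct (traj_step n p u Ht m ltac:(lia)) as [_ H]. rewrite H.
    destruct Ht as [_ [_ [_ [_ Hp]]]]. specialize (Hp m ltac:(lia)).
    left; apply Rinv_0_lt_compat; lra.
Qed.

Lemma key (p p' u u' : R) : 0 < p -> p < p' -> 0 <= u' -> u' <= u -> p * u <= p' * u' ->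
  (p ^ 2 * (u + 1) - 1) * p' < (p' ^ 2 * (u' + 1) - 1) * p.
Proof.
  intros. assert (A : p * (u + 1) < p' * (u' + 1)) by nra.
  assert (B : p' * p * (p * (u + 1)) < p' * p * (p' * (u' + 1))).
  { apply Rmult_lt_compat_l; nra. }
  nra.
Qed.

Lemma uniq_lt n p u p' u' : is_trajectory n p u -> is_trajectory n p' u' ->
  p 0%nat < p' 0%nat -> False.
Proof.
  intros Ht Ht' H0.
  assert (Inv : forall j, (j < n)%nat ->
    p j < p' j /\ u' j <= u j /\ p j * u j <= p' j * u' j).
  { induction j as [|j IH]; intros Hj.
    - destruct Ht as [_ [Hu _]]. destruct Ht' as [_ [Hu' _]].
      rewrite Hu, Hu'. repeat split; lra.
    - destruct (IH ltac:(lia)) as [A [B C]].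
      destruct (traj_step n p u Ht j ltac:(lia)) as [E1 E2].
      destruct (traj_step n p' u' Ht' j ltac:(lia)) as [E1' E2'].
      assert (Pj : 0 < p j) by (destruct Ht as [_ [_ [_ [_ Hp]]]]; apply Hp; lia).
      assert (PSj : 0 < p (S j)) by (destruct Ht as [_ [_ [_ [_ Hp]]]]; apply Hp; lia).
      assert (U' : 0 <= u' j) by (apply (u_nonneg n p' u' Ht'); lia).
      pose proof (key (p j) (p' j) (u j) (u' j) Pj A U' B C) as K.
      rewrite <- E1, <- E1' in K.
      rewrite E2, E2'.
      assert (p (S j) < p' (S j)).
      { assert (p (S j) * p' j < p' (S j) * p j) by lra. nra. }
      repeat split; try assumption.
      + apply Rinv_le_contravar; lra.
      + apply (Rmult_le_reg_r (p j * p' j)). nra.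
        replace (p (S j) * / p j * (p j * p' j)) with (p (S j) * p' j) by (field; lra).
        replace (p' (S j) * / p' j * (p j * p' j)) with (p' (S j) * p j) by (field; lra).
        lra. }
  destruct n as [|m]. { destruct Ht as [H _]. lia. }
  destruct (Inv m ltac:(lia)) as [A [B C]].
  destruct (traj_step (S m) p u Ht m ltac:(lia)) as [E1 E2].
  destruct (traj_step (S m) p' u' Ht' m ltac:(lia)) as [E1' E2'].
  assert (Pj : 0 < p m) by (destruct Ht as [_ [_ [_ [_ Hp]]]]; apply Hp; lia).
  assert (U' : 0 <= u' m) by (apply (u_nonneg (S m) p' u' Ht'); lia).
  pose proof (key (p m) (p' m) (u m) (u' m) Pj A U' B C) as K.
  rewrite <- E1, <- E1' in K.
  destruct Ht as [_ [_ [_ [Z _]]]]. destruct Ht' as [_ [_ [_ [Z' _]]]].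
  rewrite Z, Z' in K. lra.
Qed.

Lemma uniq n p u p' u' : is_trajectory n p u -> is_trajectory n p' u' ->
  forall j, (j <= n)%nat -> p j = p' j /\ u j = u' j.
Proof.
  intros Ht Ht'.
  assert (H0 : p 0%nat = p' 0%nat).
  { destruct (Rtotal_order (p 0%nat) (p' 0%nat)) as [H|[H|H]]; auto.
    - exfalso; exact (uniq_lt n p u p' u' Ht Ht' H).
    - exfalso; exact (uniq_lt n p' u' p u Ht' Ht H). }
  induction j as [|j IH]; intros Hj.
  - split; auto. destruct Ht as [_ [Hu _]]. destruct Ht' as [_ [Hu' _]]. lra.
  - destruct (IH ltac:(lia)) as [A B].
    destruct (traj_step n p u Ht j ltac:(lia)) as [E1 E2].
    destruct (traj_step n p' u' Ht' j ltac:(lia)) as [E1' E2'].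
    rewrite E1, E2, E1', E2', A, B. split; reflexivity.
Qed.

Lemma rev_traj n p u : is_trajectory n p u ->
  is_trajectory n (fun j => u (n - j)%nat) (fun j => p (n - j)%nat).
Proof.
  intros Ht. pose proof Ht as [Hn [Hu0 [_ [Hpn Hpos]]]].
  split; [exact Hn|]. split. { rewrite Nat.sub_0_r. exact Hpn. }
  split.
  - intros j Hj.
    set (m := (n - j)%nat).
    replace (n - (j - 1))%nat with (S m) by (unfold m; lia).
    destruct (traj_step n p u Ht m ltac:(unfold m; lia)) as [E1 E2].
    assert (Pm : 0 < p m) by (apply Hpos; unfold m; lia).
    unfold Phi. rewrite E1, E2. f_equal.
    + field. lra.
    + rewrite Rinv_inv. reflexivity.
  - split.
    + rewrite Nat.sub_diag. exact Hu0.
    + intros j Hj.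
      destruct (traj_step n p u Ht (n - j - 1)%nat ltac:(lia)) as [_ E2].
      replace (S (n - j - 1)) with (n - j)%nat in E2 by lia.
      rewrite E2. apply Rinv_0_lt_compat. apply Hpos. lia.
Qed.

Theorem lemma3 :
  (* (a) Phi^{-1} = swap_sigma o Phi o swap_sigma wherever defined *)
  ((forall p u : R, p <> 0 -> swap_sigma (Phi (swap_sigma (Phi (p, u)))) = (p, u)) /\
   (forall p u : R, u <> 0 -> Phi (swap_sigma (Phi (swap_sigma (p, u)))) = (p, u))) /\
  (* (b) and (c) *)
  (forall (n : nat) (p u : nat -> R), is_trajectory n p u ->
     (forall j : nat, (j <= n)%nat -> u j = p (n - j)%nat) /\
     u n = p 0%nat /\
     (forall k : nat, n = (2 * k)%nat -> p k = u k) /\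
     (forall k : nat, (1 <= k)%nat -> n = (2 * k - 1)%nat ->
        p (k - 1)%nat = 1 /\ u k = 1)).
Proof.
  split.
  - split; intros p u H; simpl; f_equal;
      first [apply Rinv_inv | field; exact H].
  - intros n p u Ht.
    pose proof (rev_traj n p u Ht) as Hr.
    assert (B : forall j, (j <= n)%nat -> u j = p (n - j)%nat).
    { intros j Hj. destruct (uniq n _ _ _ _ Hr Ht (n - j)%nat ltac:(lia)) as [A _].
      replace (n - (n - j))%nat with j in A by lia. exact A. }
    split; [exact B|]. split.
    { rewrite (B n ltac:(lia)), Nat.sub_diag. reflexivity. }
    split.
    + intros k Hk. rewrite (B k ltac:(lia)). f_equal. lia.
    + intros k Hk1 Hk.
      pose proof (B k ltac:(lia)) as E.
      replace (n - k)%nat with (k - 1)%nat in E by lia.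
      destruct (traj_step n p u Ht (k - 1)%nat ltac:(lia)) as [_ E2].
      replace (S (k - 1)) with k in E2 by lia.
      assert (P : 0 < p (k - 1)%nat) by (destruct Ht as [_ [_ [_ [_ Hp]]]]; apply Hp; lia).
      assert (Q : p (k - 1)%nat * p (k - 1)%nat = 1).
      { rewrite <- E at 1. rewrite E2. field. lra. }
      assert (p (k - 1)%nat = 1) by nra.
      split; [assumption|]. lra.
Qed.
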